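(* Let $T\in(0,\infty]$ and let $u(x,t)=(u_1,u_2)$, $x=(x_1,x_2)\in\mathbb{R}^2$, $t\in[0,T)$, be a smooth velocity field given by a smooth stream function $\psi(x,t)$ via $u=\nabla^{\perp}\psi=\left(-\frac{\partial\psi}{\partial x_2},\frac{\partial\psi}{\partial x_1}\right)$, and let $\theta$ be a smooth solution of $(\partial_t+u\cdot\nabla)\theta=0$ on $[0,T)$. Assume the fluid forms a sharp front at time $T$ (in the sense defined in the context), with curves $x_2=f_\pm(x_1,t)$, $x_1\in[a,b]$. Then for all $t\in[0,T)$, $$\frac{d}{dt}\int_a^b\big[f_+(x_1,t)-f_-(x_1,t)\big]\,dx_1=\psi(b,f_+(b,t),t)-\psi(b,f_-(b,t),t)+\psi(a,f_-(a,t),t)-\psi(a,f_+(a,t),t).$$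
   Context: Sharp front at time $T$: there are an interval $[a,b]$ with $a<b$ and functions $f_\pm\in C^1([a,b]\times[0,T))$ such that (i) $f_-(x_1,t)<f_+(x_1,t)$ for all $x_1\in[a,b]$, $t\in[0,T)$; (ii) the arcs $\Gamma_\pm(t)=\{(x_1,x_2): x_2=f_\pm(x_1,t),\ x_1\in[a,b]\}$ move with the fluid, i.e. $u_2(x_1,x_2,t)=\frac{\partial f_\pm}{\partial x_1}(x_1,t)\,u_1(x_1,x_2,t)+\frac{\partial f_\pm}{\partial t}(x_1,t)$ at $x_2=f_\pm(x_1,t)$, for all $x_1\in[a,b]$, $t\in[0,T)$; (iii) $\lim_{t\to T^-}(f_+(x_1,t)-f_-(x_1,t))=0$ for all $x_1\in[a,b]$; and (iv) $f_+(x_1,t)-f_-(x_1,t)$ is bounded on $[a,b]\times[0,T)$. *)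

(* Defs.v *)
From Stdlib Require Import Reals List.
From Coquelicot Require Import Coquelicot.
Open Scope R_scope.

Definition tdom (T : Rbar) (t : R) : Prop := 0 <= t /\ Rbar_lt (Finite t) T.

(* Derivative of g at x relative to the set D (one-sided at endpoints of intervals). *)
Definition is_deriv_within (D : R -> Prop) (g : R -> R) (x l : R) : Prop :=
  filterlim (fun h => (g (x + h) - g x) / h)
    (within (fun h => h <> 0 /\ D (x + h)) (locally 0)) (locally l).

Definition at_T (T : Rbar) : (R -> Prop) -> Prop :=
  match T with
  | Finite r => at_left r
  | p_infty => Rbar_locally p_infty
  | m_infty => Rbar_locally m_infty
  end.

Definition cont3_on (T : Rbar) (F : R -> R -> R -> R) : Prop :=
  forall x1 x2 t, tdom T t ->
  forall eps, 0 < eps -> exists delta, 0 < delta /\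
    forall y1 y2 s, tdom T s -> Rabs (y1 - x1) < delta -> Rabs (y2 - x2) < delta ->
      Rabs (s - t) < delta -> Rabs (F y1 y2 s - F x1 x2 t) < eps.

Definition cont2_on (a b : R) (T : Rbar) (F : R -> R -> R) : Prop :=
  forall x t, a <= x <= b -> tdom T t ->
  forall eps, 0 < eps -> exists delta, 0 < delta /\
    forall y s, a <= y <= b -> tdom T s -> Rabs (y - x) < delta ->
      Rabs (s - t) < delta -> Rabs (F y s - F x t) < eps.

Inductive coord := X1 | X2 | Tm.

Definition partial_on (T : Rbar) (F G : R -> R -> R -> R) (c : coord) : Prop :=
  forall x1 x2 t, tdom T t ->
  match c with
  | X1 => is_deriv_within (fun _ => True) (fun s => F s x2 t) x1 (G x1 x2 t)
  | X2 => is_deriv_within (fun _ => True) (fun s => F x1 s t) x2 (G x1 x2 t)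
  | Tm => is_deriv_within (tdom T) (fun s => F x1 x2 s) t (G x1 x2 t)
  end.

(* Smooth (C^infinity) on R^2 x [0,T): all iterated partial derivatives exist
   and are continuous; D l is the iterated derivative along the list l. *)
Definition smooth_on (T : Rbar) (F : R -> R -> R -> R) : Prop :=
  exists D : list coord -> R -> R -> R -> R,
    (forall x1 x2 t, tdom T t -> D nil x1 x2 t = F x1 x2 t) /\
    (forall l c, partial_on T (D l) (D (c :: l)) c) /\
    (forall l, cont3_on T (D l)).

Definition C1_rect (a b : R) (T : Rbar) (f fx ft : R -> R -> R) : Prop :=
  (forall x t, a <= x <= b -> tdom T t ->
     is_deriv_within (fun y => a <= y <= b) (fun y => f y t) x (fx x t)) /\
  (forall x t, a <= x <= b -> tdom T t ->
     is_deriv_within (tdom T) (fun s => f x s) t (ft x t)) /\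
  cont2_on a b T f /\ cont2_on a b T fx /\ cont2_on a b T ft.

(* Main.v *)
Require Import Defs.
From Stdlib Require Import Reals List Lra Classical IndefiniteDescription.
From Coquelicot Require Import Coquelicot.
Open Scope R_scope.

Lemma dw_eps (D : R -> Prop) g x l :
  (forall eps, 0 < eps -> exists delta, 0 < delta /\ forall h, h <> 0 -> D (x + h) ->
     Rabs h < delta -> Rabs ((g (x + h) - g x) / h - l) < eps) ->
  is_deriv_within D g x l.
Proof.
  intros H P [e He].
  destruct (H e (cond_pos e)) as [d [Hd Hh]].
  exists (mkposreal d Hd). intros h Bh [Hh0 HD]. apply He.
  apply Hh; auto. unfold ball in Bh; simpl in Bh. unfold AbsRing_ball, abs, minus, plus, opp in Bh; simpl in Bh.
  change (Rabs (h + - 0) < d) in Bh. rewrite Ropp_0, Rplus_0_r in Bh. exact Bh.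
Qed.

Lemma eps_dw (D : R -> Prop) g x l :
  is_deriv_within D g x l ->
  (forall eps, 0 < eps -> exists delta, 0 < delta /\ forall h, h <> 0 -> D (x + h) ->
     Rabs h < delta -> Rabs ((g (x + h) - g x) / h - l) < eps).
Proof.
  intros H eps Heps.
  destruct (H (fun y => Rabs (y - l) < eps)) as [d Hd].
  { exists (mkposreal eps Heps). intros y By. exact By. }
  exists d. split. apply cond_pos. intros h H0 HD Hh. apply (Hd h). 
  unfold ball; simpl. unfold AbsRing_ball, abs, minus, plus, opp; simpl.
  change (Rabs (h + - 0) < d). rewrite Ropp_0, Rplus_0_r. exact Hh. split; auto.
Qed.

Lemma cont_eps (f : R -> R) x :
  (forall eps, 0 < eps -> exists delta, 0 < delta /\ forall y,
     Rabs (y - x) < delta -> Rabs (f y - f x) < eps) -> continuous f x.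
Proof.
  intros H P [e He].
  destruct (H e (cond_pos e)) as [d [Hd Hh]].
  exists (mkposreal d Hd). intros y By. apply He. apply Hh. exact By.
Qed.
Definition clamp (lo hi s : R) := Rmax lo (Rmin hi s).

Lemma clamp_in lo hi s : lo <= hi -> lo <= clamp lo hi s <= hi.
Proof. intros; unfold clamp, Rmax, Rmin; repeat destruct Rle_dec; lra. Qed.

Lemma clamp_id lo hi s : lo <= s <= hi -> clamp lo hi s = s.
Proof. intros; unfold clamp, Rmax, Rmin; repeat destruct Rle_dec; lra. Qed.

Lemma clamp_lip lo hi s x : lo <= x <= hi -> Rabs (clamp lo hi s - x) <= Rabs (s - x).
Proof. intros; unfold clamp, Rmax, Rmin; repeat destruct Rle_dec; split_Rabs; lra. Qed.

Lemma dw_cont (D : R -> Prop) g x l :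
  is_deriv_within D g x l ->
  forall eps, 0 < eps -> exists delta, 0 < delta /\ forall y, D y ->
     Rabs (y - x) < delta -> Rabs (g y - g x) < eps.
Proof.
  intros H eps Heps.
  destruct (eps_dw D g x l H 1 Rlt_0_1) as [d [Hd Hh]].
  exists (Rmin d (eps / (Rabs l + 1))). split.
  { apply Rmin_pos; auto. apply Rdiv_lt_0_compat; auto. pose proof (Rabs_pos l); lra. }
  intros y Dy Hy.
  destruct (Req_dec y x) as [->|Hne].
  { replace (g x - g x) with 0 by ring. rewrite Rabs_R0; auto. }
  set (h := y - x). assert (Hh0 : h <> 0) by (unfold h; lra).
  assert (E : y = x + h) by (unfold h; ring). rewrite E in Dy |- *.
  assert (Hy1 : Rabs h < d) by (eapply Rlt_le_trans; [exact Hy| apply Rmin_l]).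
  assert (Hy2 : Rabs h < eps / (Rabs l + 1)) by (eapply Rlt_le_trans; [exact Hy| apply Rmin_r]).
  specialize (Hh h Hh0 Dy Hy1).
  assert (Q : Rabs ((g (x + h) - g x) / h) <= Rabs l + 1).
  { replace ((g (x + h) - g x) / h) with (((g (x + h) - g x) / h - l) + l) by ring.
    eapply Rle_trans. apply Rabs_triang. lra. }
  replace (g (x + h) - g x) with (((g (x + h) - g x) / h) * h) by (field; auto).
  rewrite Rabs_mult.
  assert (P : 0 < Rabs l + 1) by (pose proof (Rabs_pos l); lra).
  apply Rle_lt_trans with ((Rabs l + 1) * Rabs h).
  apply Rmult_le_compat_r; auto. apply Rabs_pos.
  apply Rmult_lt_reg_r with (/ (Rabs l + 1)). apply Rinv_0_lt_compat; auto.
  replace ((Rabs l + 1) * Rabs h * / (Rabs l + 1)) with (Rabs h) by (field; lra).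
  exact Hy2.
Qed.

Lemma mvt_dw (D : R -> Prop) g g' c d :
  (forall s, Rmin c d <= s <= Rmax c d -> D s) ->
  (forall s, Rmin c d <= s <= Rmax c d -> is_deriv_within D g s (g' s)) ->
  exists xi, Rmin c d <= xi <= Rmax c d /\ g d - g c = g' xi * (d - c).
Proof.
  intros HD Hg.
  set (lo := Rmin c d) in *. set (hi := Rmax c d) in *.
  assert (Hlh : lo <= hi) by (unfold lo, hi; apply Rle_trans with c; [apply Rmin_l|apply Rmax_l]).
  assert (Hc : lo <= c <= hi) by (unfold lo, hi; split; [apply Rmin_l|apply Rmax_l]).
  assert (Hd : lo <= d <= hi) by (unfold lo, hi; split; [apply Rmin_r|apply Rmax_r]).
  set (G := fun s => g (clamp lo hi s)).
  destruct (MVT_gen G c d g') as [xi [Hxi E]].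
  - intros x Hx. fold lo hi in Hx. apply is_derive_Reals. intros eps Heps.
    destruct (eps_dw D g x (g' x) (Hg x ltac:(lra)) eps Heps) as [de [Hde Hh]].
    assert (P : 0 < Rmin de (Rmin (x - lo) (hi - x))).
    { repeat apply Rmin_pos; lra. }
    exists (mkposreal _ P). intros h Hh0 Hhd. simpl in Hhd.
    assert (h1 : Rabs h < de) by (eapply Rlt_le_trans; [exact Hhd|apply Rmin_l]).
    assert (h2 : Rabs h < Rmin (x - lo) (hi - x)) by (eapply Rlt_le_trans; [exact Hhd|apply Rmin_r]).
    assert (h3 : Rabs h < x - lo) by (eapply Rlt_le_trans; [exact h2|apply Rmin_l]).
    assert (h4 : Rabs h < hi - x) by (eapply Rlt_le_trans; [exact h2|apply Rmin_r]).
    assert (Hin : lo <= x + h <= hi) by (split_Rabs; lra).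
    unfold G. rewrite (clamp_id lo hi (x + h)) by lra. rewrite (clamp_id lo hi x) by lra.
    apply Hh; auto.
  - intros x Hx. fold lo hi in Hx. apply continuity_pt_filterlim. apply cont_eps.
    intros eps Heps.
    destruct (dw_cont D g x (g' x) (Hg x Hx) eps Heps) as [de [Hde Hh]].
    exists de. split; auto. intros y Hy. unfold G. rewrite (clamp_id lo hi x) by lra.
    apply Hh. apply HD. apply clamp_in; auto.
    eapply Rle_lt_trans. apply clamp_lip; auto. auto.
  - exists xi. split; auto. unfold G in E. rewrite (clamp_id lo hi d), (clamp_id lo hi c) in E by lra.
    exact E.
Qed.
Definition contw (a b : R) (f : R -> R) x := forall eps, 0 < eps -> exists delta, 0 < delta /\
  forall y, a <= y <= b -> Rabs (y - x) < delta -> Rabs (f y - f x) < eps.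

Lemma clamp_lip2 lo hi s s' : lo <= hi -> Rabs (clamp lo hi s - clamp lo hi s') <= Rabs (s - s').
Proof. intros; unfold clamp, Rmax, Rmin; repeat destruct Rle_dec; split_Rabs; lra. Qed.

Lemma clamp_cont a b f : a <= b -> (forall x, a <= x <= b -> contw a b f x) ->
  forall z, continuous (fun s => f (clamp a b s)) z.
Proof.
  intros Hab Hf z. apply cont_eps. intros eps Heps.
  destruct (Hf (clamp a b z) (clamp_in a b z Hab) eps Heps) as [d [Hd H]].
  exists d; split; auto. intros y Hy. apply H. apply clamp_in; auto.
  eapply Rle_lt_trans. apply clamp_lip2; auto. auto.
Qed.

Lemma exRInt_w a b f : a <= b -> (forall x, a <= x <= b -> contw a b f x) -> ex_RInt f a b.
Proof.
  intros Hab Hf. apply ex_RInt_ext with (fun s => f (clamp a b s)).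
  { intros x Hx. rewrite Rmin_left, Rmax_right in Hx by lra. rewrite clamp_id; auto; lra. }
  apply (@ex_RInt_continuous R_CompleteNormedModule). intros; apply clamp_cont; auto.
Qed.

Lemma derive_dw (D : R -> Prop) g x l : is_derive g x l -> is_deriv_within D g x l.
Proof.
  intros H. apply is_derive_Reals in H. apply dw_eps. intros eps Heps.
  destruct (H eps Heps) as [d Hd]. exists d. split. apply cond_pos.
  intros h H0 _ Hh. apply Hd; auto.
Qed.

Lemma dw_minus (D : R -> Prop) f g x l m : is_deriv_within D f x l -> is_deriv_within D g x m ->
  is_deriv_within D (fun s => f s - g s) x (l - m).
Proof.
  intros Hf Hg. apply dw_eps. intros eps Heps.
  destruct (eps_dw D f x l Hf (eps/2) ltac:(lra)) as [d1 [Hd1 H1]].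
  destruct (eps_dw D g x m Hg (eps/2) ltac:(lra)) as [d2 [Hd2 H2]].
  exists (Rmin d1 d2). split. apply Rmin_pos; auto.
  intros h H0 HD Hh.
  assert (h1 : Rabs h < d1) by (eapply Rlt_le_trans; [exact Hh|apply Rmin_l]).
  assert (h2 : Rabs h < d2) by (eapply Rlt_le_trans; [exact Hh|apply Rmin_r]).
  specialize (H1 h H0 HD h1). specialize (H2 h H0 HD h2).
  replace ((f (x + h) - g (x + h) - (f x - g x)) / h - (l - m)) with
    (((f (x + h) - f x) / h - l) - ((g (x + h) - g x) / h - m)) by (field; auto).
  eapply Rle_lt_trans. apply Rabs_triang. rewrite Rabs_Ropp. lra.
Qed.

Lemma ftc_w a b F f : a < b ->
  (forall x, a <= x <= b -> is_deriv_within (fun y => a <= y <= b) F x (f x)) ->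
  (forall x, a <= x <= b -> contw a b f x) -> RInt f a b = F b - F a.
Proof.
  intros Hab HF Hf.
  set (ft := fun s => f (clamp a b s)).
  assert (Hc : forall z, continuous ft z) by (apply clamp_cont; auto; lra).
  assert (Hex : forall u v, ex_RInt ft u v) by (intros; apply (@ex_RInt_continuous R_CompleteNormedModule); auto).
  set (H := fun y => RInt ft a y - F y).
  destruct (mvt_dw (fun y => a <= y <= b) H (fun _ => 0) a b) as [xi [_ E]].
  - rewrite Rmin_left, Rmax_right by lra. auto.
  - rewrite Rmin_left, Rmax_right by lra. intros s Hs.
    replace 0 with (f s - f s) by ring. apply dw_minus; auto.
    apply derive_dw.
    replace (f s) with (ft s) by (unfold ft; rewrite clamp_id; auto).
    apply (is_derive_RInt ft (fun y => RInt ft a y) a); auto.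
    exists (mkposreal 1 Rlt_0_1). intros; apply (@RInt_correct R_CompleteNormedModule); auto.
  - unfold H in E. rewrite RInt_point in E.
    rewrite (RInt_ext f ft). unfold zero in E; simpl in E. lra.
    intros x Hx. rewrite Rmin_left, Rmax_right in Hx by lra. unfold ft; rewrite clamp_id; auto; lra.
Qed.
Lemma unif_t a b T F t : a <= b -> cont2_on a b T F -> tdom T t ->
  forall eps, 0 < eps -> exists delta, 0 < delta /\ forall x s, a <= x <= b -> tdom T s ->
    Rabs (s - t) < delta -> Rabs (F x s - F x t) < eps.
Proof.
  intros Hab HF Ht eps Heps.
  assert (Ex : forall x0, exists d : posreal, a <= x0 <= b -> forall y s, a <= y <= b -> tdom T s ->
     Rabs (y - x0) < d -> Rabs (s - t) < d -> Rabs (F y s - F x0 t) < eps / 2).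
  { intros x0. destruct (Rle_dec a x0); [destruct (Rle_dec x0 b)|].
    - destruct (HF x0 t ltac:(lra) Ht (eps/2) ltac:(lra)) as [d [Hd H]].
      exists (mkposreal d Hd). intros _. exact H.
    - exists (mkposreal 1 Rlt_0_1). intros; lra.
    - exists (mkposreal 1 Rlt_0_1). intros; lra. }
  set (delta := fun x0 => proj1_sig (constructive_indefinite_description _ (Ex x0))).
  assert (Hdelta : forall x0, a <= x0 <= b -> forall y s, a <= y <= b -> tdom T s ->
     Rabs (y - x0) < delta x0 -> Rabs (s - t) < delta x0 -> Rabs (F y s - F x0 t) < eps / 2).
  { intros x0. unfold delta. destruct (constructive_indefinite_description _ (Ex x0)) as [d Hd]. exact Hd. }
  destruct (compactness_value_1d a b delta) as [d Hd].
  exists d. split. apply cond_pos. intros x s Hx Hs Hst.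
  destruct (classic (exists x0, a <= x0 <= b /\ Rabs (x - x0) < delta x0 /\ d <= delta x0)) as [[x0 [H1 [H2 H3]]]|N].
  2: { exfalso. exact (Hd x Hx N). }
  pose proof (Hdelta x0 H1 x s Hx Hs H2 ltac:(lra)) as A1.
  assert (Z : Rabs (t - t) < delta x0) by (replace (t - t) with 0 by ring; rewrite Rabs_R0; apply cond_pos).
  pose proof (Hdelta x0 H1 x t Hx Ht H2 Z) as A2.
  replace (F x s - F x t) with ((F x s - F x0 t) - (F x t - F x0 t)) by ring.
  eapply Rle_lt_trans. apply Rabs_triang. rewrite Rabs_Ropp. lra.
Qed.
Definition jc (p : R -> R -> R) x0 y0 := forall eps, 0 < eps -> exists d, 0 < d /\
  forall x y, Rabs (x - x0) < d -> Rabs (y - y0) < d -> Rabs (p x y - p x0 y0) < eps.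

Lemma rmin_lt a b c : a < Rmin b c -> a < b /\ a < c.
Proof. intros H; split; eapply Rlt_le_trans; eauto; [apply Rmin_l|apply Rmin_r]. Qed.

Lemma mvt_full g g' c d : (forall s, is_derive g s (g' s)) ->
  exists xi, Rmin c d <= xi <= Rmax c d /\ g d - g c = g' xi * (d - c).
Proof.
  intros H. apply (mvt_dw (fun _ => True)); auto. intros; apply derive_dw; auto.
Qed.

Lemma chain_w a b (P p1 p2 : R -> R -> R) F Fx x0 :
  a <= x0 <= b ->
  (forall x y, is_derive (fun s => P s y) x (p1 x y)) ->
  (forall x y, is_derive (fun s => P x s) y (p2 x y)) ->
  jc p1 x0 (F x0) -> jc p2 x0 (F x0) ->
  is_deriv_within (fun y => a <= y <= b) F x0 Fx ->
  is_deriv_within (fun y => a <= y <= b) (fun x => P x (F x)) x0 (p1 x0 (F x0) + p2 x0 (F x0) * Fx).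
Proof.
  intros Hx0 H1 H2 C1 C2 HF. apply dw_eps. intros eps Heps.
  set (y0 := F x0) in *.
  set (K := Rabs Fx + 1). set (U := Rabs (p2 x0 y0) + 1).
  assert (HK : 0 < K) by (unfold K; pose proof (Rabs_pos Fx); lra).
  assert (HU : 0 < U) by (unfold U; pose proof (Rabs_pos (p2 x0 y0)); lra).
  destruct (eps_dw _ F x0 Fx HF (Rmin 1 (eps / (3 * U)))) as [dq [Hdq Hq]].
  { apply Rmin_pos. lra. apply Rdiv_lt_0_compat; lra. }
  destruct (C1 (eps / 3) ltac:(lra)) as [d1 [Hd1 E1]].
  destruct (C2 (eps / (3 * K))) as [d2 [Hd2 E2]].
  { apply Rdiv_lt_0_compat; lra. }
  exists (Rmin dq (Rmin d1 (Rmin (d1 / K) (d2 / K)))). split.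
  { repeat apply Rmin_pos; try apply Rdiv_lt_0_compat; lra. }
  intros h Hh0 HD Hh.
  apply rmin_lt in Hh as [Hh Hh']. apply rmin_lt in Hh' as [Hh1 Hh']. apply rmin_lt in Hh' as [Hh2 Hh3].
  specialize (Hq h Hh0 HD Hh).
  set (q := (F (x0 + h) - y0) / h) in *.
  assert (Hq1 : Rabs (q - Fx) < 1) by (eapply Rlt_le_trans; [exact Hq|apply Rmin_l]).
  assert (Hq2 : Rabs (q - Fx) < eps / (3 * U)) by (eapply Rlt_le_trans; [exact Hq|apply Rmin_r]).
  assert (Hqb : Rabs q <= K).
  { unfold K. replace q with ((q - Fx) + Fx) by ring. eapply Rle_trans. apply Rabs_triang. lra. }
  assert (HFh : F (x0 + h) - y0 = q * h) by (unfold q; field; auto).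
  assert (HFb : Rabs (F (x0 + h) - y0) <= K * Rabs h).
  { rewrite HFh, Rabs_mult. apply Rmult_le_compat_r; auto. apply Rabs_pos. }
  assert (HKh1 : K * Rabs h < d1).
  { apply Rmult_lt_reg_r with (/ K). apply Rinv_0_lt_compat; lra.
    replace (K * Rabs h * / K) with (Rabs h) by (field; lra). exact Hh2. }
  assert (HKh2 : K * Rabs h < d2).
  { apply Rmult_lt_reg_r with (/ K). apply Rinv_0_lt_compat; lra.
    replace (K * Rabs h * / K) with (Rabs h) by (field; lra). exact Hh3. }
  destruct (mvt_full (fun s => P s (F (x0 + h))) (fun s => p1 s (F (x0 + h))) x0 (x0 + h)) as [xi [Hxi EA]].
  { intros; apply H1. }
  destruct (mvt_full (fun s => P x0 s) (fun s => p2 x0 s) y0 (F (x0 + h))) as [eta [Heta EB]].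
  { intros; apply H2. }
  simpl in EA, EB.
  assert (Hxi' : Rabs (xi - x0) < d1).
  { apply Rle_lt_trans with (Rabs h); [|assumption].
    revert Hxi. unfold Rmin, Rmax; repeat destruct Rle_dec; intros; split_Rabs; lra. }
  assert (Heta' : Rabs (eta - y0) <= Rabs (F (x0 + h) - y0)).
  { revert Heta. unfold Rmin, Rmax; repeat destruct Rle_dec; intros; split_Rabs; lra. }
  assert (A1 : Rabs (p1 xi (F (x0 + h)) - p1 x0 y0) < eps / 3).
  { apply E1; auto. lra. }
  assert (A2 : Rabs (p2 x0 eta - p2 x0 y0) < eps / (3 * K)).
  { apply E2. replace (x0 - x0) with 0 by ring; rewrite Rabs_R0; lra. lra. }
  replace ((P (x0 + h) (F (x0 + h)) - P x0 y0) / h - (p1 x0 y0 + p2 x0 y0 * Fx)) with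
    ((p1 xi (F (x0 + h)) - p1 x0 y0) + (p2 x0 eta - p2 x0 y0) * q + p2 x0 y0 * (q - Fx)).
  2: { replace (P (x0 + h) (F (x0 + h)) - P x0 y0) with
         ((P (x0 + h) (F (x0 + h)) - P x0 (F (x0 + h))) + (P x0 (F (x0 + h)) - P x0 y0)) by ring.
       rewrite EA, EB, HFh. field. auto. }
  assert (B2 : Rabs ((p2 x0 eta - p2 x0 y0) * q) <= eps / 3).
  { rewrite Rabs_mult. apply Rle_trans with (eps / (3 * K) * K).
    apply Rmult_le_compat; try apply Rabs_pos; lra. right; field; lra. }
  assert (B3 : Rabs (p2 x0 y0 * (q - Fx)) <= eps / 3).
  { rewrite Rabs_mult. apply Rle_trans with (U * (eps / (3 * U))).
    apply Rmult_le_compat; try apply Rabs_pos; unfold U in *; lra. right; field; lra. }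
  pose proof (Rabs_triang (p1 xi (F (x0 + h)) - p1 x0 y0 + (p2 x0 eta - p2 x0 y0) * q) (p2 x0 y0 * (q - Fx))).
  pose proof (Rabs_triang (p1 xi (F (x0 + h)) - p1 x0 y0) ((p2 x0 eta - p2 x0 y0) * q)).
  lra.
Qed.
Lemma smooth_cont T F : smooth_on T F -> cont3_on T F.
Proof.
  intros [D [H0 [_ H2]]] x1 x2 t Ht eps Heps.
  destruct (H2 nil x1 x2 t Ht eps Heps) as [d [Hd H]].
  exists d; split; auto. intros y1 y2 s Hs A B C.
  rewrite <- (H0 y1 y2 s Hs), <- (H0 x1 x2 t Ht). auto.
Qed.

Lemma cont3_jc T F t x0 y0 : cont3_on T F -> tdom T t -> jc (fun x y => F x y t) x0 y0.
Proof.
  intros C Ht eps Heps. destruct (C x0 y0 t Ht eps Heps) as [d [Hd H]].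
  exists d; split; auto. intros x y A B. apply H; auto.
  replace (t - t) with 0 by ring; rewrite Rabs_R0; auto.
Qed.

Lemma jc_opp p x0 y0 : jc p x0 y0 -> jc (fun x y => - p x y) x0 y0.
Proof.
  intros C eps Heps. destruct (C eps Heps) as [d [Hd H]]. exists d; split; auto.
  intros x y A B. replace (- p x y - - p x0 y0) with (- (p x y - p x0 y0)) by ring.
  rewrite Rabs_Ropp; auto.
Qed.

Lemma dwT_derive g x l : is_deriv_within (fun _ => True) g x l -> is_derive g x l.
Proof.
  intros H. apply is_derive_Reals. intros eps Heps.
  destruct (eps_dw _ g x l H eps Heps) as [d [Hd Hh]].
  exists (mkposreal d Hd). intros h H0 H1. apply Hh; auto.
Qed.

Lemma tdom_conv T t t' s : tdom T t -> tdom T t' -> Rmin t t' <= s <= Rmax t t' -> tdom T s.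
Proof.
  unfold tdom. intros [A B] [C D] E.
  assert (0 <= s) by (revert E; unfold Rmin, Rmax; repeat destruct Rle_dec; lra).
  split; auto. destruct T; simpl in *; auto.
  revert E; unfold Rmin, Rmax; repeat destruct Rle_dec; lra.
Qed.

Lemma cont2_w a b T F t x : cont2_on a b T F -> tdom T t -> a <= x <= b -> contw a b (fun y => F y t) x.
Proof.
  intros C Ht Hx eps Heps. destruct (C x t Hx Ht eps Heps) as [d [Hd H]].
  exists d; split; auto. intros y Hy A. apply H; auto.
  replace (t - t) with 0 by ring; rewrite Rabs_R0; auto.
Qed.

Lemma contw_minus a b f g x : contw a b f x -> contw a b g x -> contw a b (fun y => f y - g y) x.
Proof.
  intros Cf Cg eps Heps.
  destruct (Cf (eps/2) ltac:(lra)) as [d1 [Hd1 H1]].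
  destruct (Cg (eps/2) ltac:(lra)) as [d2 [Hd2 H2]].
  exists (Rmin d1 d2). split. apply Rmin_pos; auto.
  intros y Hy A. apply rmin_lt in A as [A1 A2].
  specialize (H1 y Hy A1). specialize (H2 y Hy A2).
  replace (f y - g y - (f x - g x)) with ((f y - f x) - (g y - g x)) by ring.
  eapply Rle_lt_trans. apply Rabs_triang. rewrite Rabs_Ropp. lra.
Qed.

Lemma stepA T (psi u1 u2 : R -> R -> R -> R) a b f fx ft t :
  a < b -> tdom T t ->
  cont3_on T u1 -> cont3_on T u2 ->
  partial_on T psi (fun x1 x2 t => - u1 x1 x2 t) X2 ->
  partial_on T psi u2 X1 ->
  C1_rect a b T f fx ft ->
  (forall x1 t, a <= x1 <= b -> tdom T t ->
      u2 x1 (f x1 t) t = fx x1 t * u1 x1 (f x1 t) t + ft x1 t) ->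
  RInt (fun x => ft x t) a b = psi b (f b t) t - psi a (f a t) t.
Proof.
  intros Hab Ht C1 C2 P1 P2 [Hx [_ [Cf [Cfx Cft]]]] Hii.
  apply (ftc_w a b (fun x => psi x (f x t) t) (fun x => ft x t)); auto.
  - intros x Hxab.
    replace (ft x t) with (u2 x (f x t) t + (- u1 x (f x t) t) * fx x t) by (rewrite Hii; auto; ring).
    apply (chain_w a b (fun x y => psi x y t) (fun x y => u2 x y t) (fun x y => - u1 x y t) (fun x => f x t)); auto.
    + intros x' y. apply dwT_derive. apply (P2 x' y t Ht).
    + intros x' y. apply dwT_derive. apply (P1 x' y t Ht).
    + apply (cont3_jc T); auto.
    + apply jc_opp. apply (cont3_jc T); auto.
  - intros x Hxab. apply (cont2_w a b T); auto.
Qed.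

Theorem lemma1
  (T : Rbar) (HT : Rbar_lt (Finite 0) T)
  (psi u1 u2 theta : R -> R -> R -> R)
  (Hpsi : smooth_on T psi)
  (Hu1 : smooth_on T u1) (Hu2 : smooth_on T u2)
  (* u = grad^perp psi = (- d psi / d x2, d psi / d x1) *)
  (Hu1psi : partial_on T psi (fun x1 x2 t => - u1 x1 x2 t) X2)
  (Hu2psi : partial_on T psi u2 X1)
  (Htheta : smooth_on T theta)
  (Htransport : exists th1 th2 tht : R -> R -> R -> R,
      partial_on T theta th1 X1 /\ partial_on T theta th2 X2 /\
      partial_on T theta tht Tm /\
      forall x1 x2 t, tdom T t ->
        tht x1 x2 t + u1 x1 x2 t * th1 x1 x2 t + u2 x1 x2 t * th2 x1 x2 t = 0)
  (* sharp front at time T *)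
  (a b : R) (Hab : a < b)
  (fp fm fpx fpt fmx fmt : R -> R -> R)
  (Hfp : C1_rect a b T fp fpx fpt) (Hfm : C1_rect a b T fm fmx fmt)
  (Hi : forall x1 t, a <= x1 <= b -> tdom T t -> fm x1 t < fp x1 t)
  (Hiip : forall x1 t, a <= x1 <= b -> tdom T t ->
      u2 x1 (fp x1 t) t = fpx x1 t * u1 x1 (fp x1 t) t + fpt x1 t)
  (Hiim : forall x1 t, a <= x1 <= b -> tdom T t ->
      u2 x1 (fm x1 t) t = fmx x1 t * u1 x1 (fm x1 t) t + fmt x1 t)
  (Hiii : forall x1, a <= x1 <= b ->
      filterlim (fun t => fp x1 t - fm x1 t) (at_T T) (locally 0))
  (Hiv : exists M, forall x1 t, a <= x1 <= b -> tdom T t ->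
      Rabs (fp x1 t - fm x1 t) <= M) :
  forall t, tdom T t ->
    is_deriv_within (tdom T) (fun s => RInt (fun x1 => fp x1 s - fm x1 s) a b) t
      (psi b (fp b t) t - psi b (fm b t) t + psi a (fm a t) t - psi a (fp a t) t).
Proof.
  intros t Ht.
  pose proof (smooth_cont T u1 Hu1) as C1. pose proof (smooth_cont T u2 Hu2) as C2.
  assert (Ap := stepA T psi u1 u2 a b fp fpx fpt t Hab Ht C1 C2 Hu1psi Hu2psi Hfp Hiip).
  assert (Am := stepA T psi u1 u2 a b fm fmx fmt t Hab Ht C1 C2 Hu1psi Hu2psi Hfm Hiim).
  destruct Hfp as [_ [Dp [Cp [_ Cpt]]]]. destruct Hfm as [_ [Dm [Cm [_ Cmt]]]].
  assert (EX : forall F F' s, cont2_on a b T F -> cont2_on a b T F' -> tdom T s ->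
     ex_RInt (fun x => F x s - F' x s) a b).
  { intros F F' s HF HF' Hs. apply exRInt_w. lra. intros x Hx.
    apply (contw_minus a b (fun y => F y s) (fun y => F' y s)); apply (cont2_w a b T); auto. }
  assert (EX1 : forall F s, cont2_on a b T F -> tdom T s -> ex_RInt (fun x => F x s) a b).
  { intros F s HF Hs. apply exRInt_w. lra. intros x Hx. apply (cont2_w a b T); auto. }
  set (J := RInt (fun x => fpt x t - fmt x t) a b).
  assert (HJ : J = psi b (fp b t) t - psi b (fm b t) t + psi a (fm a t) t - psi a (fp a t) t).
  { unfold J. 
    assert (RR := is_RInt_minus _ _ a b _ _ (@RInt_correct R_CompleteNormedModule _ _ _ (EX1 fpt t Cpt Ht))
                   (@RInt_correct R_CompleteNormedModule _ _ _ (EX1 fmt t Cmt Ht))).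
    apply is_RInt_unique in RR. simpl in RR. unfold minus, plus, opp in RR; simpl in RR.
    change (RInt (fun x => fpt x t - fmt x t) a b = RInt (fun x => fpt x t) a b - RInt (fun x => fmt x t) a b) in RR.
    rewrite RR, Ap, Am. match goal with |- ?x = ?y => change (@eq R x y) end; ring. }
  rewrite <- HJ. apply dw_eps. intros eps Heps.
  set (e' := eps / (4 * (b - a))).
  assert (He' : 0 < e') by (unfold e'; apply Rdiv_lt_0_compat; lra).
  destruct (unif_t a b T fpt t ltac:(lra) Cpt Ht e' He') as [d1 [Hd1 U1]].
  destruct (unif_t a b T fmt t ltac:(lra) Cmt Ht e' He') as [d2 [Hd2 U2]].
  exists (Rmin d1 d2). split. apply Rmin_pos; auto.
  intros h Hh0 Hth Hh. apply rmin_lt in Hh as [Hh1 Hh2].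
  set (I1 := RInt (fun x => fp x (t + h) - fm x (t + h)) a b).
  set (I0 := RInt (fun x => fp x t - fm x t) a b).
  set (k := fun x => (fp x (t + h) - fm x (t + h)) - (fp x t - fm x t) - h * (fpt x t - fmt x t)).
  assert (Hk : RInt k a b = I1 - I0 - h * J).
  { assert (RR := is_RInt_minus _ _ a b _ _
        (is_RInt_minus _ _ a b _ _ (@RInt_correct R_CompleteNormedModule _ _ _ (EX fp fm (t + h) Cp Cm Hth))
                                   (@RInt_correct R_CompleteNormedModule _ _ _ (EX fp fm t Cp Cm Ht)))
        (is_RInt_scal _ a b h _ (@RInt_correct R_CompleteNormedModule _ _ _ (EX fpt fmt t Cpt Cmt Ht)))).
    apply is_RInt_unique in RR. exact RR. }
  assert (Bk : Rabs (RInt k a b) <= (b - a) * (Rabs h * (2 * e'))).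
  { apply abs_RInt_le_const. lra.
    apply (ex_RInt_ext (fun x => minus (minus (fp x (t + h) - fm x (t + h)) (fp x t - fm x t)) (scal h (fpt x t - fmt x t)))).
    { intros; reflexivity. }
    apply (@ex_RInt_minus R_NormedModule). apply (@ex_RInt_minus R_NormedModule).
    apply EX; auto. apply EX; auto. apply (@ex_RInt_scal R_NormedModule). apply EX; auto.
    intros x Hx.
    destruct (mvt_dw (tdom T) (fun s => fp x s - fm x s) (fun s => fpt x s - fmt x s) t (t + h)) as [xi [Hxi E]].
    { intros s Hs. apply (tdom_conv T t (t + h)); auto. }
    { intros s Hs. apply dw_minus. apply Dp; auto. apply (tdom_conv T t (t + h)); auto.
      apply Dm; auto. apply (tdom_conv T t (t + h)); auto. }
    assert (Txi : tdom T xi) by (apply (tdom_conv T t (t + h)); auto).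
    assert (Hxt : Rabs (xi - t) <= Rabs h).
    { revert Hxi. unfold Rmin, Rmax; repeat destruct Rle_dec; intros; split_Rabs; lra. }
    assert (V1 := U1 x xi Hx Txi ltac:(lra)). assert (V2 := U2 x xi Hx Txi ltac:(lra)).
    unfold k. rewrite E. replace (t + h - t) with h by ring.
    replace ((fpt x xi - fmt x xi) * h - h * (fpt x t - fmt x t)) with
      (h * ((fpt x xi - fpt x t) - (fmt x xi - fmt x t))) by ring.
    rewrite Rabs_mult. apply Rmult_le_compat_l. apply Rabs_pos.
    eapply Rle_trans. apply Rabs_triang. rewrite Rabs_Ropp. lra. }
  rewrite Hk in Bk.
  replace ((I1 - I0) / h - J) with ((I1 - I0 - h * J) / h) by (field; auto).
  unfold Rdiv. rewrite Rabs_mult, Rabs_inv.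
  assert (Hah : 0 < Rabs h) by (apply Rabs_pos_lt; auto).
  apply Rle_lt_trans with ((b - a) * (Rabs h * (2 * e')) * / Rabs h).
  apply Rmult_le_compat_r. left; apply Rinv_0_lt_compat; auto. auto.
  replace ((b - a) * (Rabs h * (2 * e')) * / Rabs h) with (eps / 2).
  lra. unfold e'. field. split; lra.
Qed.
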